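(* Let $X$ be a fake weighted projective space with weights $(\lambda_0,\ldots,\lambda_n)$. If $X$ has at worst terminal (respectively canonical) singularities, then $\mathbb{P}(\lambda_0,\ldots,\lambda_n)$ has at worst terminal (respectively canonical) singularities.
   Context: Let $N\cong\mathbb{Z}^n$ be a lattice and $N_\mathbb{R}:=N\otimes_\mathbb{Z}\mathbb{R}$. Let $\rho_0,\ldots,\rho_n\in N$ be primitive lattice points with $N_\mathbb{R}=\sum_{i=0}^n\mathbb{R}_{\geq0}\rho_i$. There are positive integers $\lambda_0,\ldots,\lambda_n$ with $\gcd\{\lambda_0,\ldots,\lambda_n\}=1$, unique up to order, such that $\sum_{i=0}^n\lambda_i\rho_i=0$. The cones $\sigma_i$ generated by $\{\rho_j: j\neq i\}$, $i=0,\ldots,n$, generate a complete simplicial fan; the associated projective toric variety $X$ is called a fake weighted projective space with weights $(\lambda_0,\ldots,\lambda_n)$. $\mathbb{P}(\lambda_0,\ldots,\lambda_n)$ denotes the usual weighted projective space with these weights. *)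

(* Defs.v *)
From HB Require Import structures.
From mathcomp Require Import all_boot all_order all_algebra.
Set Implicit Arguments. Unset Strict Implicit. Unset Printing Implicit Defensive.
Import Order.TTheory GRing.Theory Num.Theory.
Local Open Scope ring_scope.

(* The lattice N = Z^n is 'rV[int]_n; N_Q = 'rV[rat]_n. *)
Definition toQ (n : nat) (v : 'rV[int]_n) : 'rV[rat]_n := map_mx intr v.

Definition primitive (n : nat) (v : 'rV[int]_n) : Prop :=
  v != 0 /\ forall (k : int) (w : 'rV[int]_n), v = k *: w -> `|k| = 1.

Definition fake_wps (n : nat) (rho : 'I_n.+1 -> 'rV[int]_n)
    (lam : 'I_n.+1 -> nat) : Prop :=
  [/\ forall i, primitive (rho i),
      forall v : 'rV[rat]_n, exists c : 'I_n.+1 -> rat,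
        (forall i, 0 <= c i) /\ v = \sum_i c i *: toQ (rho i),
      forall i, (0 < lam i)%N,
      \big[gcdn/0%N]_i lam i = 1%N
    & \sum_i (lam i)%:Z *: rho i = 0].

(* Toric terminal / canonical conditions (Cox-Little-Schenck Prop. 11.4.12)
   for the simplicial fan with maximal cones sigma_i = cone(rho_j : j <> i).
   For u = sum_{j<>i} c_j rho_j in sigma_i, the value <m_sigma_i, u> of the
   linear form equal to 1 on the rho_j (j<>i) is sum_j c_j. *)
Definition fwps_terminal (n : nat) (rho : 'I_n.+1 -> 'rV[int]_n) : Prop :=
  forall (i : 'I_n.+1) (u : 'rV[int]_n) (c : 'I_n.+1 -> rat),
    (forall j, 0 <= c j) -> c i = 0 ->
    toQ u = \sum_j c j *: toQ (rho j) -> \sum_j c j <= 1 ->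
    u = 0 \/ exists2 j, j != i & u = rho j.

Definition fwps_canonical (n : nat) (rho : 'I_n.+1 -> 'rV[int]_n) : Prop :=
  forall (i : 'I_n.+1) (u : 'rV[int]_n) (c : 'I_n.+1 -> rat),
    (forall j, 0 <= c j) -> c i = 0 ->
    toQ u = \sum_j c j *: toQ (rho j) -> \sum_j c j < 1 ->
    u = 0.

(* The weighted projective space P(lam_0,...,lam_n): lattice
   N' = Z^{n+1} / Z (lam_0,...,lam_n), rays = images of the standard basis
   vectors e_0..e_n, maximal cones sigma_i = cone(e_j : j <> i).
   Elements of N' are represented by a : 'rV[int]_n.+1. *)
Definition lamvec (n : nat) (lam : 'I_n.+1 -> nat) : 'rV[int]_n.+1 :=
  \row_i (lam i)%:Z.
Definition evec (n : nat) (j : 'I_n.+1) : 'rV[int]_n.+1 :=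
  \row_k (k == j)%:R.

Definition wps_eq (n : nat) (lam : 'I_n.+1 -> nat) (a b : 'rV[int]_n.+1) :=
  exists s : int, a - b = s *: lamvec lam.

(* [a] lies in sigma_i with coordinates c iff a = sum c_j e_j + t lam in Q^{n+1} *)
Definition wps_terminal (n : nat) (lam : 'I_n.+1 -> nat) : Prop :=
  forall (i : 'I_n.+1) (a : 'rV[int]_n.+1) (c : 'I_n.+1 -> rat) (t : rat),
    (forall j, 0 <= c j) -> c i = 0 ->
    toQ a = \sum_j c j *: toQ (evec j) + t *: toQ (lamvec lam) ->
    \sum_j c j <= 1 ->
    wps_eq lam a 0 \/ exists2 j, j != i & wps_eq lam a (evec j).

Definition wps_canonical (n : nat) (lam : 'I_n.+1 -> nat) : Prop :=
  forall (i : 'I_n.+1) (a : 'rV[int]_n.+1) (c : 'I_n.+1 -> rat) (t : rat),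
    (forall j, 0 <= c j) -> c i = 0 ->
    toQ a = \sum_j c j *: toQ (evec j) + t *: toQ (lamvec lam) ->
    \sum_j c j < 1 ->
    wps_eq lam a 0.

(* Main.v *)
Require Import Defs.
From HB Require Import structures.
From mathcomp Require Import all_boot all_order all_algebra.
Import Order.TTheory GRing.Theory Num.Theory.
Set Implicit Arguments. Unset Strict Implicit.
Local Open Scope ring_scope.

Definition Mq n (rho : 'I_n.+1 -> 'rV[int]_n) : 'M[rat]_(n.+1, n) :=
  \matrix_(i < n.+1) toQ (rho i).
Definition phi n (rho : 'I_n.+1 -> 'rV[int]_n) (b : 'rV[int]_n.+1) : 'rV[int]_n :=
  \sum_j b 0 j *: rho j.

Lemma toQ_phi n rho (b : 'rV[int]_n.+1) : toQ (phi rho b) = toQ b *m Mq rho.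
Proof.
rewrite mulmx_sum_row; apply/rowP => k.
rewrite /toQ /phi !mxE !summxE rmorph_sum; apply: eq_bigr => j _.
by rewrite !mxE rmorphM.
Qed.

Lemma toQ_inj n (u v : 'rV[int]_n) : toQ u = toQ v -> u = v.
Proof.
move=> h; apply/rowP => k; have := congr1 (fun w : 'rV[rat]_n => w 0 k) h.
by rewrite !mxE => /eqP; rewrite eqr_int => /eqP.
Qed.

Lemma phiB n rho (a b : 'rV[int]_n.+1) : phi rho (a - b) = phi rho a - phi rho b.
Proof.
rewrite /phi -sumrB; apply: eq_bigr => j _; by rewrite !mxE scalerBl.
Qed.

Lemma phi_e n rho (j : 'I_n.+1) : phi rho (evec j) = rho j.
Proof.
rewrite /phi (bigD1 j) //= big1 ?addr0; first by rewrite mxE eqxx scale1r.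
by move=> k /negbTE kj; rewrite mxE kj scale0r.
Qed.

Lemma full_Mq n rho : (forall v : 'rV[rat]_n, exists c : 'I_n.+1 -> rat,
        (forall i, 0 <= c i) /\ v = \sum_i c i *: toQ (rho i)) -> row_full (Mq rho).
Proof.
move=> H; rewrite -sub1mx; apply/row_subP => k.
have [c [_ ->]] := H (row k 1%:M).
apply/submxP; exists (\row_i c i); rewrite mulmx_sum_row.
by apply: eq_bigr => i _; rewrite rowK mxE.
Qed.
Lemma int_mult (n:nat) (lam : 'I_n.+1 -> nat) (q : rat) (b: 'I_n.+1 -> int) :
 \big[gcdn/0%N]_i lam i = 1%N -> (forall j, (b j)%:~R = q * (lam j)%:R) ->
 q = (numq q)%:~R.
Proof.
move=> hg hb.
have hq : q * (denq q)%:~R = (numq q)%:~R.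
  by rewrite -{1}(divq_num_den q) mulfVK // intr_eq0 denq_neq0.
have hd : forall j, (`|denq q| %| lam j)%N.
  move=> j.
  have e : b j * denq q = numq q * (lam j)%:Z.
    apply: (@intr_inj rat); rewrite !rmorphM /= hb.
    by rewrite mulrAC hq.
  have : (`|denq q| %| `|numq q| * lam j)%N.
    by rewrite -[X in (_ * X)%N]/(`|(lam j)%:Z|%N) -abszM -e abszM dvdn_mull.
  by rewrite Gauss_dvdr // coprime_sym coprime_num_den.
have d1 : `|denq q|%N = 1%N.
  apply/eqP; rewrite -dvdn1 -hg.
  by apply: (big_ind (fun x => `|denq q| %| x)%N) => // x y hx hy; rewrite dvdn_gcd hx.
have : denq q = 1.
  by have := denq_gt0 q; rewrite -[denq q]gez0_abs ?d1 // => /ltW.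
by move=> e1; rewrite -{1}(divq_num_den q) e1 divr1.
Qed.
Lemma ker_phi n rho lam : fake_wps rho lam -> forall b : 'rV[int]_n.+1,
  phi rho b = 0 -> exists s : int, b = s *: lamvec lam.
Proof.
case=> _ hspan hpos hg hsum b hb.
have hl : phi rho (lamvec lam) = 0.
  by rewrite -hsum /phi; apply: eq_bigr => j _; rewrite mxE.
have toQ0 : toQ (0 : 'rV[int]_n) = 0 by apply/rowP => k; rewrite !mxE.
set K := kermx (Mq rho).
have rK : \rank K = 1%N.
  by rewrite mxrank_ker (eqP (full_Mq hspan)) subSnn.
set L := toQ (lamvec lam).
have sLK : (L <= K)%MS by apply/sub_kermxP; rewrite -toQ_phi hl toQ0.
have sbK : (toQ b <= K)%MS by apply/sub_kermxP; rewrite -toQ_phi hb toQ0.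
have L0 : L != 0.
  apply/eqP => /rowP /(_ 0); rewrite !mxE => /eqP.
  by rewrite intr_eq0 eqz_nat; have := hpos 0; case: (lam 0).
have eLK : (L == K)%MS.
  by rewrite -(mxrank_leqif_eq sLK).2 rK rank_rV L0.
have sbL : (toQ b <= L)%MS by apply: submx_trans sbK _; case/andP: eLK.
case/submxP: sbL => D hD.
set q := D 0 0.
have hj : forall j, (b 0 j)%:~R = q * (lam j)%:R.
  move=> j; have := congr1 (fun w : 'rV[rat]_n.+1 => w 0 j) hD.
  by rewrite [D]mx11_scalar mul_scalar_mx !mxE.
have hq := int_mult hg hj.
exists (numq q); apply/rowP => j; apply: (@intr_inj rat).
by rewrite hj !mxE rmorphM /= -hq.
Qed.
Lemma phi_coord n rho lam (a : 'rV[int]_n.+1) (c : 'I_n.+1 -> rat) t :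
  phi rho (lamvec lam) = 0 ->
  toQ a = \sum_j c j *: toQ (evec j) + t *: toQ (lamvec lam) ->
  toQ (phi rho a) = \sum_j c j *: toQ (rho j).
Proof.
move=> hl ha.
have toQ0 : toQ (0 : 'rV[int]_n) = 0 by apply/rowP => k; rewrite !mxE.
rewrite toQ_phi ha mulmxDl mulmx_suml -scalemxAl -toQ_phi hl toQ0 scaler0 addr0.
by apply: eq_bigr => j _; rewrite -scalemxAl -toQ_phi phi_e.
Qed.

Theorem mainTheorem3 (n : nat) (rho : 'I_n.+1 -> 'rV[int]_n)
    (lam : 'I_n.+1 -> nat) :
  fake_wps rho lam ->
  (fwps_terminal rho -> wps_terminal lam) /\
  (fwps_canonical rho -> wps_canonical lam).
Proof.
move=> hf; have hk := ker_phi hf.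
have hl : phi rho (lamvec lam) = 0.
  by case: hf => _ _ _ _ hsum; rewrite -hsum /phi; apply: eq_bigr => j _; rewrite mxE.
split.
- move=> hT i a c t hc hci ha hs.
  have [h0|[j ji hj]] := hT i _ c hc hci (phi_coord hl ha) hs.
    by left; have [s ->] := hk a h0; exists s; rewrite subr0.
  right; exists j => //.
  have [s hs2] : exists s : int, a - evec j = s *: lamvec lam.
    by apply: hk; rewrite phiB hj phi_e subrr.
  by exists s.
- move=> hC i a c t hc hci ha hs.
  have h0 := hC i _ c hc hci (phi_coord hl ha) hs.
  by have [s ->] := hk a h0; exists s; rewrite subr0.
Qed.
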